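(* Let $p$ be a prime, $n\ge 1$, and let $A_r$ and $A_s$ be symmetric $n\times n$ matrices with entries in $\mathbb{Z}_p$. If $\det(A_r-A_s)\neq 0 \pmod p$, then the graph-state bases $\mathcal{B}_{A_r}$ and $\mathcal{B}_{A_s}$ of $(\mathbb{C}^p)^{\otimes n}$ are mutually unbiased, i.e. $|\langle G_{A_r}(m_1,\dots,m_n)|G_{A_s}(m'_1,\dots,m'_n)\rangle|^2 = 1/p^n$ for all $m_i,m'_i\in\mathbb{Z}_p$.
   Context: Let $\omega_p=e^{2\pi i/p}$. On $\mathbb{C}^p$ with computational basis $\{|0\rangle,\dots,|p-1\rangle\}$ let $|+\rangle=p^{-1/2}\sum_{k=0}^{p-1}|k\rangle$ and $Z=\sum_k \omega_p^k|k\rangle\langle k|$. On $(\mathbb{C}^p)^{\otimes n}$ define the one-qupit phase gates $U_{i,i}=\sum_{k=0}^{1} i^k|k\rangle\langle k|_i$ if $p=2$ (here $i=\sqrt{-1}$ in the phase) and $U_{i,i}=\sum_{k=0}^{p-1}\omega_p^{k(k-1)/2}|k\rangle\langle k|_i$ if $p\ge 3$, and for $i\neq j$ the controlled-phase gates $U_{i,j}=\sum_{k,l=0}^{p-1}\omega_p^{kl}|k\rangle\langle k|_i\otimes|l\rangle\langle l|_j$ (subscripts indicate the tensor factor acted upon). For a symmetric $n\times n$ matrix $A$ over $\mathbb{Z}_p$ (entries viewed as integers in $\{0,\dots,p-1\}$), the generalized graph state is $|G_A\rangle=\prod_{i\le j}U_{i,j}^{A_{i,j}}|+\rangle^{\otimes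 n}$, and the graph-state basis is $\mathcal{B}_A=\{|G_A(m_1,\dots,m_n)\rangle\}_{m_i\in\mathbb{Z}_p}$ with $|G_A(m_1,\dots,m_n)\rangle=Z^{m_1}\otimes\cdots\otimes Z^{m_n}|G_A\rangle$. Two orthonormal bases of $\mathbb{C}^d$ are mutually unbiased if every element of one has squared overlap $1/d$ with every element of the other. *)

(* Defs.v *)
From HB Require Import structures.
From mathcomp Require Import all_boot all_order all_algebra.
From mathcomp Require Import complex.
From mathcomp Require Import reals trigo.
Set Implicit Arguments. Unset Strict Implicit. Unset Printing Implicit Defensive.
Import GRing.Theory Num.Theory.
Local Open Scope ring_scope.

(* omega_p = e^{2 pi i / p} = cos(2pi/p) + i sin(2pi/p) *)
Definition omega (R : realType) (p : nat) : R[i] :=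
  (cos (2 * pi / p%:R) +i* sin (2 * pi / p%:R))%C.

(* Computational basis labels of (C^p)^{\otimes n}: x = (x_1,...,x_n), x_i in {0..p-1}. *)
Definition cbasis (p n : nat) := {ffun 'I_n -> 'I_p}.

(* A vector of (C^p)^{\otimes n}, given by its coordinates in the computational basis. *)
Definition qstate (R : realType) (p n : nat) := cbasis p n -> R[i].

Definition braket (R : realType) (p n : nat) (u v : qstate R p n) : R[i] :=
  \sum_(x : cbasis p n) (u x)^* * v x.

Definition plus_n (R : realType) (p n : nat) : qstate R p n :=
  fun _ => (sqrtC (p%:R : R[i]))^-1 ^+ n.

Definition apply_diag (R : realType) (p n : nat) (d : cbasis p n -> R[i])
  (v : qstate R p n) : qstate R p n := fun x => d x * v x.

Definition U_diag (R : realType) (p n : nat) (i j : 'I_n) (x : cbasis p n) : R[i] :=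
  if i == j then
    (if p == 2%N then ('i%C) ^+ (x i : nat)
     else omega R p ^+ (((x i : nat) * (x i : nat).-1) %/ 2))
  else omega R p ^+ ((x i : nat) * (x j : nat)).

Definition Z_diag (R : realType) (p n : nat) (m : 'I_n -> 'F_p) (x : cbasis p n) : R[i] :=
  \prod_(i < n) omega R p ^+ ((m i : nat) * (x i : nat)).

(* |G_A> = prod_{i<=j} U_{i,j}^{A_{i,j}} |+>^{\otimes n}; the gates are diagonal,
   so their product is the diagonal operator with the product of diagonals. *)
Definition graph_state (R : realType) (p n : nat) (A : 'M['F_p]_n) : qstate R p n :=
  apply_diag (fun x => \prod_(i < n) \prod_(j < n | (i <= j)%N)
                         U_diag R i j x ^+ (A i j : nat)) (@plus_n R p n).

Definition graph_basis_state (R : realType) (p n : nat) (A : 'M['F_p]_n)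
  (m : 'I_n -> 'F_p) : qstate R p n :=
  apply_diag (Z_diag R m) (graph_state R A).

(* Main.v *)
Require Import Defs.
From HB Require Import structures.
From mathcomp Require Import all_boot all_order all_algebra.
From mathcomp Require Import complex.
From mathcomp Require Import reals trigo.
From mathcomp Require Import ring.
Import Order.TTheory GRing.Theory Num.Theory.
Local Open Scope ring_scope.

Section Omega.
Variable R : realType.
Variable p : nat.
Hypothesis hp : prime p.

Local Notation w := (omega R p).
Let th : R := 2 * pi / p%:R.

Lemma p_gt1 : (1 < p)%N. Proof. exact: prime_gt1. Qed.
Lemma pR0 : p%:R != 0 :> R.
Proof. by rewrite pnatr_eq0 -lt0n prime_gt0. Qed.

Lemma omega_exp k : w ^+ k = (cos (th * k%:R) +i* sin (th * k%:R))%C.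
Proof.
elim: k => [|k IH]; first by rewrite expr0 mulr0 cos0 sin0.
rewrite exprS IH /omega -/th; simpc.
rewrite -natr1 mulrDr mulr1 cosD sinD.
congr (_ +i* _)%C; ring.
Qed.

Lemma omega_p : w ^+ p = 1.
Proof.
rewrite omega_exp /th divfK ?pR0 // mulr_natl cos2pi sin2pi //.
Qed.

Lemma omega_neq1 : w != 1.
Proof.
apply/negP => /eqP; rewrite /omega -/th => -[h _].
have th0 : 0 < th.
  by rewrite /th divr_gt0 ?pi_gt0 ?ltr0n ?prime_gt0 // mulr_gt0 ?pi_gt0.
have thpi : th <= pi.
  rewrite /th ler_pdivrMr ?ltr0n ?prime_gt0 // mulrC ler_pM2l ?pi_gt0 //.
  by rewrite ler_nat prime_gt1.
have : cos th < cos 0.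
  have h1 : (0:R) \in `[0, pi] by rewrite in_itv /= lexx pi_ge0.
  have h2 : th \in `[0, pi] by rewrite in_itv /= (ltW th0) thpi.
  by rewrite ltr_cos.
by rewrite cos0 h ltxx.
Qed.

Lemma omega_conj : w * w^* = 1.
Proof.
rewrite /omega -[(_ +i* _)%C^*]/(cos th +i* - sin th)%C; simpc.
rewrite -/th -!expr2 cos2Dsin2 (mulrC (cos th)) addNr.
done.
Qed.

Definition e (a : 'F_p) : R[i] := w ^+ (a : nat).

Lemma Fp_natr (a : 'F_p) : (a : nat)%:R = a.
Proof. exact: natr_Zp. Qed.

Lemma eN k : e (k%:R) = w ^+ k.
Proof. by rewrite /e val_Fp_nat // expr_mod // omega_p. Qed.

Lemma eD a b : e (a + b) = e a * e b.
Proof. by rewrite -{1}[a]Fp_natr -{1}[b]Fp_natr -natrD eN exprD. Qed.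

Lemma eM a b : e (a * b) = w ^+ (a * b)%N.
Proof. by rewrite -{1}[a]Fp_natr -{1}[b]Fp_natr -natrM eN. Qed.

Lemma e0 : e 0 = 1.
Proof. by rewrite /e expr0. Qed.

Lemma e1 : e 1 = w.
Proof. by have := eN 1; rewrite expr1. Qed.

Lemma eX a k : e a ^+ k = e (a * k%:R).
Proof. by rewrite -{2}[a]Fp_natr -natrM eN exprM. Qed.

Lemma e_um a : e a * (e a)^* = 1.
Proof. by rewrite /e rmorphXn -exprMn omega_conj expr1n. Qed.

Lemma e_conj a : (e a)^* = e (- a).
Proof.
rewrite -[LHS]mul1r -(e0) -(subrr a) eD -mulrA (mulrC (e (-a))) mulrA.
by rewrite e_um mul1r.
Qed.

Lemma e_sum (I : finType) (P : pred I) (f : I -> 'F_p) :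
  \prod_(i | P i) e (f i) = e (\sum_(i | P i) f i).
Proof. by rewrite (big_morph e eD e0). Qed.

Definition D (a : 'F_p) : R[i] :=
  if p == 2%N then ('i%C) ^+ (a : nat) else w ^+ (((a:nat) * (a:nat).-1) %/ 2).

Lemma i_um : ('i%C : R[i]) * ('i%C)^* = 1.
Proof. by rewrite -[(('i%C : R[i])^*)]/(0 +i* -1)%C; simpc. Qed.

Lemma D_um a : D a * (D a)^* = 1.
Proof.
by rewrite /D; case: ifP => _; rewrite rmorphXn -exprMn ?omega_conj ?i_um expr1n.
Qed.

Lemma two_neq0 : p != 2%N -> (2%:R : 'F_p) != 0.
Proof.
move=> hp2; rewrite -(dvdn_pcharf (pchar_Fp hp)) dvdn_prime2 //.
Qed.

Lemma D_odd a : p != 2%N -> D a = e (a * (a - 1) / 2%:R).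
Proof.
move=> hp2; rewrite /D (negbTE hp2) -[in RHS](Fp_natr a).
move: (a : nat) => k.
have h2 := two_neq0 hp2.
rewrite -eN; congr e.
case: k => [|k]; first by rewrite !mul0r.
have hd : (2 %| k.+1 * k)%N.
  by rewrite dvdn2 oddM /= andNb.
apply: (mulIf h2); rewrite divfK // -natrM /= divnK // natrM -natr1 addrK.
done.
Qed.

Lemma omega2 : p = 2%N -> w = -1.
Proof.
move=> ->; rewrite /omega mulrAC divff ?pnatr_eq0 // mul1r cospi sinpi.
by rewrite -[(-1 : R[i])]/(- (1 +i* 0))%C; simpc.
Qed.

Lemma D_add a b : D (a + b) = D a * D b * e (a * b).
Proof.
case: (boolP (p == 2%N)) => hp2; last first.
  rewrite !D_odd // -!eD; congr e.
  field; exact: two_neq0.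
have ha : (a < 2)%N by rewrite -(eqP hp2) -{2}(Fp_cast hp) ltn_ord.
have hb : (b < 2)%N by rewrite -(eqP hp2) -{2}(Fp_cast hp) ltn_ord.
rewrite eM /D hp2 -{1}[a]Fp_natr -{1}[b]Fp_natr -natrD val_Fp_nat //.
rewrite (omega2 (eqP hp2)).
move: (a : nat) (b : nat) ha hb; rewrite (eqP hp2) => -[|[|x]] [|[|y]] //= _ _;
  rewrite ?expr0 ?expr1 ?mulr1 ?mul1r //.
by rewrite -expr2 sqr_i mulrNN mulr1.
Qed.

Lemma D0 : D 0 = 1.
Proof. by rewrite /D; case: ifP. Qed.

Lemma um_prod (I : finType) (P : pred I) (F : I -> R[i]) :
  (forall i, P i -> F i * (F i)^* = 1) ->
  (\prod_(i | P i) F i) * (\prod_(i | P i) F i)^* = 1.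
Proof.
move=> h; rewrite rmorph_prod -big_split /=; exact: big1.
Qed.

Lemma um_exp (x : R[i]) k : x * x^* = 1 -> x ^+ k * (x ^+ k)^* = 1.
Proof. by move=> h; rewrite rmorphXn -exprMn h expr1n. Qed.

Variable n : nat.
Local Notation V := 'rV['F_p]_n.

Definition Ud (i j : 'I_n) (u : V) : R[i] :=
  if i == j then D (u 0 i) else e (u 0 i * u 0 j).
Definition Phi (A : 'M['F_p]_n) (u : V) : R[i] :=
  \prod_(i < n) \prod_(j < n | (i <= j)%N) Ud i j u ^+ (A i j : nat).
Definition Zf (m : 'I_n -> 'F_p) (u : V) : R[i] := \prod_(i < n) e (m i * u 0 i).
Definition bt (i j : 'I_n) (u v : V) : 'F_p :=
  if i == j then u 0 i * v 0 i else u 0 i * v 0 j + v 0 i * u 0 j.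
Definition beta (A : 'M['F_p]_n) (u v : V) : 'F_p :=
  \sum_(i < n) \sum_(j < n | (i <= j)%N) A i j * bt i j u v.

Lemma Ud_add i j u v : Ud i j (u + v) = Ud i j u * Ud i j v * e (bt i j u v).
Proof.
rewrite /Ud /bt !mxE; case: eqP => [->|_]; first exact: D_add.
by rewrite -!eD; congr e; ring.
Qed.

Lemma Phi_add A u v : Phi A (u + v) = Phi A u * Phi A v * e (beta A u v).
Proof.
rewrite /beta -e_sum; under [in RHS]eq_bigr => i _ do rewrite -e_sum.
rewrite /Phi -!big_split /=; apply: eq_bigr => i _; rewrite -!big_split /=.
by apply: eq_bigr => j _; rewrite Ud_add !exprMn eX Fp_natr (mulrC (bt _ _ _ _)).
Qed.

Lemma Ud_um i j u : Ud i j u * (Ud i j u)^* = 1.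
Proof. by rewrite /Ud; case: eqP => _; rewrite ?D_um ?e_um. Qed.

Lemma Phi_um A u : Phi A u * (Phi A u)^* = 1.
Proof. by apply: um_prod => i _; apply: um_prod => j _; apply: um_exp; exact: Ud_um. Qed.

Lemma Phi0 A : Phi A 0 = 1.
Proof.
apply: big1 => i _; apply: big1 => j _.
by rewrite /Ud !mxE; case: eqP => _; rewrite ?D0 ?mul0r ?e0 expr1n.
Qed.

Lemma Zf_add m u v : Zf m (u + v) = Zf m u * Zf m v.
Proof. by rewrite /Zf -big_split; apply: eq_bigr => i _; rewrite mxE mulrDr eD. Qed.

Lemma Zf_um m u : Zf m u * (Zf m u)^* = 1.
Proof. by apply: um_prod => i _; exact: e_um. Qed.

Lemma Zf0 m : Zf m 0 = 1.
Proof. by apply: big1 => i _; rewrite mxE mulr0 e0. Qed.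

Definition toF (x : cbasis p n) : V := \row_i ((x i : nat)%:R).

Lemma val_toF x i : ((toF x) 0 i : nat) = x i.
Proof. by rewrite mxE val_Fp_nat // modn_small. Qed.

Lemma toF_inj : injective toF.
Proof. by move=> x y h; apply/ffunP => i; apply: ord_inj; rewrite -!val_toF h. Qed.

Lemma toF_bij : bijective toF.
Proof.
apply: (inj_card_bij toF_inj).
by rewrite card_mx card_Fp // card_ffun !card_ord mul1n.
Qed.

Lemma U_toF i j x : U_diag R i j x = Ud i j (toF x).
Proof. by rewrite /U_diag /Ud /D; case: eqP => [->|_]; rewrite ?eM !val_toF. Qed.

Lemma Z_toF m x : Z_diag R m x = Zf m (toF x).
Proof. by apply: eq_bigr => i _; rewrite eM val_toF. Qed.

Lemma gbs_toF A m x : graph_basis_state R A m x =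
  Zf m (toF x) * (Phi A (toF x) * @plus_n R p n x).
Proof.
rewrite /graph_basis_state /graph_state /apply_diag Z_toF; congr (_ * (_ * _)).
by apply: eq_bigr => i _; apply: eq_bigr => j _; rewrite U_toF.
Qed.

Lemma beta_mx A u v : A^T = A ->
  beta A u v = \sum_(i < n) \sum_(j < n) u 0 i * A i j * v 0 j.
Proof.
move=> hA.
have sA k l : A k l = A l k by rewrite -{1}hA mxE.
pose f i j := u 0 i * A i j * v 0 j.
have key (i j : 'I_n) : (if (i <= j)%N then A i j * bt i j u v else 0) =
    (if (i <= j)%N then f i j else 0) + (if (i < j)%N then f j i else 0).
  rewrite /bt /f; case: (ltngtP i j) => h.
  - have -> : (i == j) = false by apply/eqP => E; rewrite E ltnn in h.
    by rewrite (sA j i); ring.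
  - by rewrite addr0.
  - have hij : i = j := ord_inj h.
    by subst j; rewrite eqxx addr0; ring.
transitivity (\sum_(i < n) \sum_(j < n)
   ((if (i <= j)%N then f i j else 0) + (if (i < j)%N then f j i else 0))).
  by apply: eq_bigr => i _; rewrite big_mkcond; apply: eq_bigr => j _; exact: key.
have E1 : \sum_(i < n) \sum_(j < n) (if (i < j)%N then f j i else 0) =
    \sum_(i < n) \sum_(j < n) (if (j < i)%N then f i j else 0).
  by rewrite exchange_big.
under eq_bigr do rewrite big_split /=.
rewrite big_split /= E1 -big_split /=.
apply: eq_bigr => i _; rewrite -big_split /=; apply: eq_bigr => j _.
by case: leqP => _; rewrite ?addr0 ?add0r.
Qed.

Lemma charsum (y : V) :
  \sum_(v : V) e (\sum_(l < n) y 0 l * v 0 l) = if y == 0 then (p ^ n)%:R else 0.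
Proof.
case: eqP => [->|hy].
  rewrite (eq_bigr (fun _ => 1)) => [|v _]; last first.
    by rewrite big1 ?e0 // => l _; rewrite mxE mul0r.
  by rewrite sumr_const card_mx card_Fp // mul1n.
have [k hk] : exists k, y 0 k != 0.
  case: (boolP [exists k, y 0 k != 0]) => [/existsP //|/existsPn h].
  by case: hy; apply/matrixP => a b; rewrite (ord1 a) mxE; exact/eqP/negPn/h.
pose dl : V := (y 0 k)^-1 *: delta_mx 0 k.
set S := (X in X = _).
have hS : S = S * w.
  rewrite {1}/S (reindex_inj (addIr dl)) /= -e1 mulr_suml; apply: eq_bigr => v _.
  rewrite -eD; congr e.
  under eq_bigr do rewrite mxE mulrDr.
  rewrite big_split /=; congr (_ + _).
  rewrite (bigD1 k) //= big1 ?addr0 => [|l hl]; last first.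
    by rewrite !mxE (negbTE hl) andbF mulr0 mulr0.
  by rewrite !mxE !eqxx mulr1 divff.
apply/eqP; move: hS => /eqP; rewrite -subr_eq0 -{1}(mulr1 S) -mulrBr mulf_eq0.
by rewrite subr_eq0 [1 == _]eq_sym (negbTE (omega_neq1)) orbF.
Qed.

Lemma cjM (x y : R[i]) : (x * y)^* = x^* * y^*.
Proof. exact: rmorphM. Qed.

Lemma main (Ar As : 'M['F_p]_n) (symr : Ar^T = Ar) (syms : As^T = As)
  (hdet : \det (Ar - As) != 0) (m m' : 'I_n -> 'F_p) :
    `|braket (graph_basis_state R Ar m) (graph_basis_state R As m')| ^+ 2
      = ((p ^ n)%:R)^-1.
Proof.
pose c : R[i] := (sqrtC (p%:R : R[i]))^-1 ^+ n.
pose H u := (Zf m u * Phi Ar u)^* * (Zf m' u * Phi As u).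
have hb : braket (graph_basis_state R Ar m) (graph_basis_state R As m')
    = c^* * c * \sum_(u : V) H u.
  rewrite /braket [in RHS](reindex toF); last exact: onW_bij toF_bij.
  rewrite mulr_sumr; apply: eq_bigr => x _; rewrite !gbs_toF /H !cjM.
  rewrite /plus_n -/c; ring.
have hc : c^* = c.
  by apply: geC0_conj; rewrite exprn_ge0 // invr_ge0 sqrtC_ge0 ler0n.
have hcc : c * c = ((p ^ n)%:R)^-1.
  by rewrite /c -exprMn -invfM -expr2 sqrtCK exprVn natrX.
have hP : ((p ^ n)%:R : R[i]) != 0.
  by rewrite pnatr_eq0 expn_eq0 negb_and -lt0n prime_gt0.
have Hadd z v : H (z + v) = H z * H v * e (beta As z v - beta Ar z v).
  rewrite /H !Zf_add !Phi_add !cjM e_conj [e (_ - _)]eD; ring.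
have Hum v : H v * (H v)^* = 1.
  rewrite /H !cjM !conjCK.
  transitivity ((Zf m v * (Zf m v)^*) * (Phi Ar v * (Phi Ar v)^*) *
     (Zf m' v * (Zf m' v)^*) * (Phi As v * (Phi As v)^*)); first by ring.
  by rewrite !Zf_um !Phi_um !mulr1.
have H0 : H 0 = 1 by rewrite /H !Zf0 !Phi0 mulr1 rmorph1 mulr1.
have gam z v : beta As z v - beta Ar z v =
    \sum_(l < n) (z *m (As - Ar)) 0 l * v 0 l.
  rewrite !beta_mx // -sumrB; under eq_bigr do rewrite -sumrB.
  under [in RHS]eq_bigr do rewrite !mxE big_distrl /=.
  rewrite [in RHS]exchange_big /=; apply: eq_bigr => i _; apply: eq_bigr => j _.
  by rewrite !mxE; ring.
have hu : (As - Ar) \in unitmx.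
  rewrite unitmxE unitfE -opprB -scaleN1r detZ mulf_neq0 //.
  by rewrite expf_neq0 // oppr_eq0 oner_eq0.
have hSS : (\sum_(u : V) H u) * (\sum_(u : V) H u)^* = (p ^ n)%:R.
  rewrite rmorph_sum mulr_sumr.
  transitivity (\sum_(v : V) \sum_(z : V) H z * e (beta As z v - beta Ar z v)).
    apply: eq_bigr => v _; rewrite mulr_suml (reindex_inj (addIr v)) /=.
    apply: eq_bigr => z _; rewrite Hadd -[RHS]mulr1 -(Hum v); ring.
  rewrite exchange_big /=.
  transitivity (\sum_(z : V) H z * (if z *m (As - Ar) == 0 then (p ^ n)%:R else 0)).
    by apply: eq_bigr => z _; rewrite -mulr_sumr; under eq_bigr do rewrite gam; rewrite charsum.
  rewrite (bigD1 0) //= big1 => [|z hz]; last first.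
    case: eqP => [hz0|]; last by rewrite mulr0.
    by move: hz; rewrite -(mulmxK hu z) hz0 mul0mx eqxx.
  by rewrite mul0mx eqxx H0 mul1r addr0.
rewrite normCK hb !cjM hc ?conjCK ?hc.
transitivity ((c * c) * (c * c) * ((\sum_u H u) * (\sum_u H u)^*)); first by ring.
by rewrite hSS hcc mulrC mulrA mulfV // mul1r.
Qed.

End Omega.

Theorem lemma1 (R : realType) (p n : nat) (hp : prime p) (hn : (1 <= n)%N)
  (Ar As : 'M['F_p]_n) (symr : Ar^T = Ar) (syms : As^T = As)
  (hdet : \det (Ar - As) != 0) :
  forall m m' : 'I_n -> 'F_p,
    `|braket (graph_basis_state R Ar m) (graph_basis_state R As m')| ^+ 2
      = ((p ^ n)%:R)^-1.
Proof. by move=> m m'; exact: main. Qed.
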